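(* Let $G$ be a finite simple graph containing at least one critical vertex. Let $a \geq 1$ and let $r_1, \ldots, r_a$ be positive integers with $1 + \sum_{i=1}^a r_i = \chi(G)$. Among all $(r_1, \ldots, r_a)$-partitioned colorings of $G$, choose one, $\pi = \{\{x\}, L_{11}, \ldots, L_{1r_1}, \ldots, L_{a1}, \ldots, L_{ar_a}\}$, minimizing \[\sum_{i=1}^a \left\| G\Big[\bigcup_{j=1}^{r_i} L_{ij}\Big] \right\|.\] Put $U_i = \bigcup_{j=1}^{r_i} L_{ij}$ and let $Z_i(x)$ be the connected component containing $x$ of $G[\{x\} \cup U_i]$. If $1 \leq i \leq a$ and $d_{Z_i(x)}(x) = r_i$, then $Z_i(x)$ is a complete graph if $r_i \geq 3$, and $Z_i(x)$ is an odd cycle if $r_i = 2$.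
   Context: A vertex $v$ of $G$ is critical if $\chi(G - v) < \chi(G)$. For a graph $H$, $\|H\|$ denotes the number of edges of $H$, and $d_H(v)$ the degree of $v$ in $H$. Given $a \geq 1$ and $r_1, \ldots, r_a$ with $1 + \sum_i r_i = \chi(G)$, an $(r_1, \ldots, r_a)$-partitioned coloring of $G$ is a proper coloring of $G$ with exactly $\chi(G)$ color classes, written in the form $\{\{x\}, L_{11}, \ldots, L_{1r_1}, L_{21}, \ldots, L_{2r_2}, \ldots, L_{a1}, \ldots, L_{ar_a}\}$, where $\{x\}$ is a singleton color class (for some vertex $x$) and each $L_{ij}$ is a color class. *)

(* Defs.v *)
(* A finite simple graph = symmetric irreflexive e : rel T, T : finType. *)
From mathcomp Require Import all_boot.
Set Implicit Arguments. Unset Strict Implicit. Unset Printing Implicit Defensive.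

Section Graphs.
Variables (T : finType) (e : rel T).

(* proper colouring of the induced subgraph G[S] with colours < k
   (values outside S are irrelevant; the codomain 'I_k.+1 just keeps the type
   inhabited when k = 0).  The test u != v is vacuous for loopless graphs. *)
Definition colorable_on (S : {set T}) (k : nat) : bool :=
  [exists f : {ffun T -> 'I_k.+1},
     [forall u in S, f u < k] &&
     [forall u in S, forall v in S, ((u != v) && e u v) ==> (f u != f v)]].

Lemma colorable_on_ex (S : {set T}) : exists k, colorable_on S k.
Proof.
have H (w : T) : (enum_rank w : nat) < #|T|.+1.
  move: (ltn_ord (enum_rank w)) => h; rewrite ltnS; exact: ltnW.
exists #|T|; apply/existsP.
exists [ffun u => inord (enum_rank u)]; apply/andP; split.
  by apply/forall_inP => u _; rewrite ffunE (inordK (H u)) ltn_ord.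
apply/forall_inP => u _; apply/forall_inP => v _; apply/implyP => /andP [uv _].
rewrite !ffunE; apply/negP => /eqP /(congr1 val).
rewrite /= (inordK (H u)) (inordK (H v)) => /val_inj /enum_rank_inj Euv.
by rewrite Euv eqxx in uv.
Qed.

Definition chi_on (S : {set T}) : nat := ex_minn (colorable_on_ex S).

Definition chi : nat := chi_on setT.

Definition critical (v : T) : Prop := chi_on (setT :\ v) < chi.

Definition nedges (U : {set T}) : nat :=
  #|[set E : {set T} | (E \subset U) &&
       [exists u, exists v, (E == [set u; v]) && (u != v) && e u v]]|.

(* vertex set of the connected component containing x of G[S] (x \in S assumed) *)
Definition component (x : T) (S : {set T}) : {set T} :=
  [set y | connect [rel u v | [&& u \in S, v \in S & e u v]] x y].

Definition deg_in (Z : {set T}) (x : T) : nat := #|[set y in Z | e x y]|.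

Definition complete_on (Z : {set T}) : Prop :=
  forall u v, u \in Z -> v \in Z -> u != v -> e u v.

Definition odd_cycle_on (Z : {set T}) : Prop :=
  exists s : seq T, [/\ uniq s, 3 <= size s, odd (size s), Z = [set x in s] &
    forall u v, u \in s -> v \in s ->
      e u v = (v == next s u) || (u == next s v)].

(* (r_1,...,r_a)-partitioned colouring: x is the singleton class (colour None);
   every other vertex v gets a colour Some (i, j) with i < a, j < r i, i.e. lies in
   class L_{i,j}; all classes L_{i,j} are nonempty (color classes); the colouring
   is proper. *)
Definition pcol (a : nat) (r : 'I_a -> nat) (x : T) (f : T -> option ('I_a * nat)) : Prop :=
  [/\ forall v, (f v == None) = (v == x),
      forall v i j, f v = Some (i, j) -> j < r i,
      forall (i : 'I_a) j, j < r i -> exists v, f v = Some (i, j) &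
      forall u v, e u v -> f u != f v].

Definition Upart (a : nat) (f : T -> option ('I_a * nat)) (i : 'I_a) : {set T} :=
  [set v | if f v is Some (i', _) then i' == i else false].

Definition pcost (a : nat) (f : T -> option ('I_a * nat)) : nat :=
  \sum_(i < a) nedges (Upart f i).

End Graphs.

(* Main.v *)
Require Import Defs.
From mathcomp Require Import all_boot zify.
Set Implicit Arguments. Unset Strict Implicit. Unset Printing Implicit Defensive.

Lemma prev_at_last (T : eqType) (y w : T) q : y \notin q -> prev_at y y w q = last w q.
Proof.
elim: q w => [|q1 q IH] w /=; first by rewrite eqxx.
rewrite inE negb_or => /andP [yq1 yq]; rewrite (negbTE yq1); exact: IH.
Qed.

Lemma next_neq_prev (T : eqType) (s : seq T) y : uniq s -> 3 <= size s -> y \in s ->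
  next s y != prev s y.
Proof.
move=> us ss ys; case: (rot_to ys) => i s' E.
have us' : uniq (y :: s') by rewrite -E rot_uniq.
have ss' : 3 <= size (y :: s') by rewrite -E size_rot.
rewrite -(next_rot i us) -(prev_rot i us) E.
case: s' us' ss' {E} => [|w [|q1 q]] //= /andP [yn /andP [wn uq]] _.
rewrite eqxx; move: yn; rewrite !inE !negb_or => /and3P [yw yq1 yq].
rewrite (negbTE yw) (negbTE yq1) prev_at_last //.
have : last q1 q \in q1 :: q := mem_last q1 q.
by apply: contraTneq => <-.
Qed.
Section Gen.
Variables (T : finType) (e : rel T).
Hypothesis e_sym : symmetric e.
Hypothesis e_irr : irreflexive e.

Lemma conn_ind (R : rel T) (P : T -> Prop) x : P x ->
  (forall u v, P u -> R u v -> P v) -> forall y, connect R x y -> P y.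
Proof.
move=> Px step y /connectP [p pth ->]; elim: p x Px pth => //= a p IH x Px /andP [Rxa pth].
exact: IH (step _ _ Px Rxa) pth.
Qed.

Lemma comp_refl t (S : {set T}) : t \in component e t S.
Proof. by rewrite inE connect0. Qed.

Lemma comp_sub t (S : {set T}) y : y \in component e t S -> y = t \/ y \in S.
Proof.
rewrite inE => H; apply: (conn_ind (P := fun y => y = t \/ y \in S)) H; first by left.
by move=> u v _ /= /and3P [_ ? _]; right.
Qed.

Lemma comp_subS t (S : {set T}) y : t \in S -> y \in component e t S -> y \in S.
Proof. by move=> tS /comp_sub [->|]. Qed.

Lemma comp_closed t (S : {set T}) u v : u \in component e t S -> u \in S -> v \in S -> e u v ->
  v \in component e t S.
Proof.
rewrite !inE => cu uS vS euv; apply: connect_trans cu _; apply: connect1.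
by rewrite /= uS vS euv.
Qed.

Lemma comp_mono t (S Sp : {set T}) : S \subset Sp -> {subset component e t S <= component e t Sp}.
Proof.
move=> sub y; rewrite !inE; apply: connect_sub => u v /= /and3P [uS vS euv].
by apply: connect1; rewrite /= (subsetP sub _ uS) (subsetP sub _ vS) euv.
Qed.

Lemma cover_count (A : {set T}) (c : T -> nat) (s : seq nat) : uniq s ->
  (forall j, j \in s -> exists2 v, v \in A & c v = j) -> size s <= #|A|.
Proof.
move=> us H; rewrite cardE -(size_map c); apply: uniq_leq_size => // j /H [v vA <-].
by apply: map_f; rewrite mem_enum.
Qed.

Lemma handshake (C : {set T}) : ~~ odd (\sum_(y in C) #|[set z in C | e y z]|).
Proof.
move: {2}#|C| (erefl #|C|) => n; elim: n C => [|n IH] C cC.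
  by move/eqP: cC; rewrite cards_eq0 => /eqP ->; rewrite big_set0.
have [y0 y0C] : exists y0, y0 \in C.
  by apply/set0Pn; rewrite -card_gt0 cC.
rewrite (big_setD1 y0 y0C) /=.
have -> : \sum_(y in C :\ y0) #|[set z in C | e y z]| =
   \sum_(y in C :\ y0) (#|[set z in C :\ y0 | e y z]| + e y y0).
  apply: eq_bigr => y _; rewrite (cardsD1 y0) inE y0C /= addnC; congr (_ + _).
  by apply: eq_card => z; rewrite !inE andbA.
rewrite big_split /=.
have -> : \sum_(y in C :\ y0) (e y y0 : nat) = #|[set z in C | e y0 z]|.
  rewrite (cardsD1 y0) inE y0C e_irr /= add0n -sum1_card [RHS]big_mkcond [LHS]big_mkcond /=.
  apply: eq_bigr => z _; rewrite !inE (e_sym z y0).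
  by case: (z == y0) => //=; case: (z \in C) => //=; case: (e y0 z).
have := IH (C :\ y0); rewrite (cardsD1 y0) y0C add1n in cC; case: cC => cC.
move=> /(_ cC) H; rewrite addnC -addnA addnn oddD odd_double addbF.
exact: H.
Qed.

Lemma two_ends (Q : {set T}) p q : p \in Q -> p != q ->
  (forall y, y \in component e p Q -> #|[set z in Q | e y z]| = 2 - ((y == p) + (y == q))) ->
  q \in component e p Q.
Proof.
move=> pQ pq H; apply/negPn/negP => qC.
set C := component e p Q in qC *.
have CQ : C \subset Q by apply/subsetP => y; exact: comp_subS.
have closedC : forall y z, y \in C -> z \in Q -> e y z -> z \in C.
  by move=> y z yC zQ eyz; exact: comp_closed yC (subsetP CQ y yC) zQ eyz.
have pC : p \in C by exact: comp_refl.
have HC : forall y, y \in C -> #|[set z in Q | e y z]| = 2 - ((y == p) + (y == q)) by [].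
clearbody C.
have := handshake C.
have -> : \sum_(y in C) #|[set z in C | e y z]| = \sum_(y in C) (2 - (y == p)).
  apply: eq_bigr => y yC.
  have yq : (y == q) = false by apply/eqP => E; rewrite -E yC in qC.
  transitivity #|[set z in Q | e y z]|; last by rewrite HC // yq addn0.
  apply: eq_card => z; rewrite !inE.
  apply/andP/andP => [[zC ->]|[zQ eyz]]; split => //.
    exact: (subsetP CQ z zC).
  exact: closedC yC zQ eyz.
rewrite (big_setD1 p pC) eqxx /=.
rewrite (eq_bigr (fun _ => 2)) => [|y]; last by rewrite !inE => /andP [/negbTE -> _].
by rewrite sum_nat_const /= oddD oddM andbF.
Qed.
End Gen.
Section Brooks.
Variables (T : finType) (e : rel T).
Hypothesis e_sym : symmetric e.
Hypothesis e_irr : irreflexive e.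
Variables (Z : {set T}) (r : nat).
Hypothesis H1 : forall z, z \in Z -> #|[set y in Z | e z y]| <= r.
Hypothesis H2 : forall g : T -> nat, (forall v, v \in Z -> g v < r) ->
  (forall u v, u \in Z -> v \in Z -> e u v -> g u != g v) -> False.

Definition State t (phi : T -> nat) := [/\ t \in Z,
  forall v, v \in Z -> v != t -> phi v < r &
  forall u v, u \in Z -> v \in Z -> u != t -> v != t -> e u v -> phi u != phi v].

Lemma P_exist t phi (c : nat) : State t phi -> c < r -> exists2 y, (y \in Z) && e t y & phi y = c.
Proof.
case=> tZ Hb Hp cr.
case: (boolP [exists y, [&& y \in Z, e t y & phi y == c]]) =>
  [/existsP [y /and3P [yZ ety /eqP <-]]|/existsPn Hn].
  by exists y; rewrite ?yZ.
exfalso; apply: (H2 (g := fun v => if v == t then c else phi v)).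
  by move=> v vZ; case: eqP => [_|/eqP vt]; [exact: cr | exact: Hb].
move=> u v uZ vZ euv.
case: (eqVneq u t) => [eu|ut]; case: (eqVneq v t) => [ev|vt].
- by subst; rewrite e_irr in euv.
- subst; move: (Hn v); rewrite vZ euv /= eq_sym; exact.
- subst; move: (Hn u); rewrite uZ (e_sym t u) euv /=; exact.
- exact: Hp.
Qed.

Lemma State_Z t phi : State t phi -> t \in Z.
Proof. by case. Qed.

Lemma P_uniq t phi y1 y2 : State t phi -> y1 \in Z -> y2 \in Z -> e t y1 -> e t y2 ->
  phi y1 = phi y2 -> y1 = y2.
Proof.
move=> St y1Z y2Z e1 e2 E; apply/eqP; apply/negPn/negP => ne.
have Hb := H1 (State_Z St).
have : r <= #|[set y in Z | e t y] :\ y2|.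
  rewrite -[r](size_iota 0); apply: (cover_count (c := phi)) (iota_uniq 0 r) _.
  move=> j; rewrite mem_iota add0n => /andP[_ jr].
  have [y /andP[yZ ety] <-] := P_exist St jr.
  case: (eqVneq y y2) => [->|yy2].
    by exists y1; rewrite ?E // !inE ne y1Z e1.
  by exists y => //; rewrite !inE yy2 yZ ety.
move: Hb; rewrite (cardsD1 y2) !inE y2Z e2 /=; lia.
Qed.

Lemma move t phi z : State t phi -> z \in Z -> e t z ->
  State z (fun v => if v == t then phi z else phi v).
Proof.
move=> St zZ etz; case: (St) => tZ Hb Hp.
have zt : z != t by apply: contraTneq etz => ->; rewrite e_irr.
split => //.
  by move=> v vZ vz; case: eqP => [_|/eqP vt]; [exact: Hb | exact: Hb].
move=> u v uZ vZ uz vz euv.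
case: (eqVneq u t) => [eu|ut]; case: (eqVneq v t) => [ev|vt] /=.
- by subst; rewrite e_irr in euv.
- subst u; apply/eqP => E; have := P_uniq St zZ vZ etz euv E.
  by move=> zv; rewrite zv eqxx in vz.
- subst v; apply/eqP => E; have := P_uniq St zZ uZ etz _ (esym E).
  by rewrite e_sym euv => /(_ isT) zu; rewrite zu eqxx in uz.
- exact: Hp.
Qed.

Definition Sij t (phi : T -> nat) (i j : nat) := [set y in Z | (y == t) || (phi y == i) || (phi y == j)].

Lemma move_S t phi z (i j : nat) : t \in Z -> z \in Sij t phi i j -> z != t ->
  Sij z (fun v => if v == t then phi z else phi v) i j = Sij t phi i j.
Proof.
move=> tZ; rewrite !inE => /andP [zZ] Hz0 zt.
have Hz : (phi z == i) || (phi z == j) by move: Hz0; rewrite (negbTE zt).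
apply/setP => v; rewrite !inE.
case: (eqVneq v t) => [->|vt] /=; first by rewrite -orbA Hz orbT.
case: (eqVneq v z) => [->|vz] //=; by rewrite zZ Hz.
Qed.

Lemma Sij_Z t phi (i j : nat) y : y \in Sij t phi i j -> y \in Z.
Proof. by rewrite inE => /andP []. Qed.

Lemma F_reach t phi (i j : nat) y : State t phi -> y \in component e t (Sij t phi i j) ->
  exists2 psi, State y psi & Sij y psi i j = Sij t phi i j.
Proof.
move=> St; rewrite inE => H.
apply: (conn_ind (P := fun y => exists2 psi, State y psi & Sij y psi i j = Sij t phi i j)) H;
  first by exists phi.
move=> u v [psi Su ES] /= /and3P [uS vS euv].
exists (fun w => if w == u then psi v else psi w).
  exact: move Su (Sij_Z vS) euv.
rewrite move_S ?ES //; first exact: State_Z Su.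
by apply: contraTneq euv => ->; rewrite e_irr.
Qed.

Lemma F_deg t phi (i j : nat) y : State t phi -> i != j -> i < r -> j < r ->
  y \in component e t (Sij t phi i j) -> #|[set z in Sij t phi i j | e y z]| = 2.
Proof.
move=> St ij ir jr /(F_reach St) [psi Sy <-].
have [yi /andP [yiZ eyi] pyi] := P_exist Sy ir.
have [yj /andP [yjZ eyj] pyj] := P_exist Sy jr.
have -> : [set z in Sij y psi i j | e y z] = [set yi; yj].
  apply/setP => z; rewrite !inE; apply/idP/idP.
    move=> /andP [/andP [zZ H] eyz].
    have zy : (z == y) = false by apply/eqP => E; rewrite E e_irr in eyz.
    rewrite zy /= in H; case/orP: H => /eqP H.
      by rewrite (P_uniq Sy zZ yiZ eyz eyi (etrans H (esym pyi))) eqxx.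
    by rewrite (P_uniq Sy zZ yjZ eyz eyj (etrans H (esym pyj))) eqxx orbT.
  by case/orP => /eqP ->; rewrite ?yiZ ?yjZ ?pyi ?pyj ?eqxx ?orbT ?eyi ?eyj.
rewrite cards2; suff -> : yi != yj by [].
by apply/eqP => E; move: ij; rewrite -pyi -pyj E eqxx.
Qed.

Lemma tS t phi (i j : nat) : State t phi -> t \in Sij t phi i j.
Proof. by move=> St; rewrite inE (State_Z St) eqxx. Qed.

Lemma LemB t phi (i j k : nat) w : State t phi -> i != j -> i != k -> j != k -> i < r -> j < r -> k < r ->
  w \in component e t (Sij t phi i j) -> w \in component e t (Sij t phi i k) ->
  w != t -> ~~ e t w -> phi w = i -> False.
Proof.
move=> St ij ik jk ir jr kr wD wD' wt etw pw.
have tZ := State_Z St.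
case: (St) => _ Hb Hp.
have wS : w \in Sij t phi i j := comp_subS (tS _ _ St) wD.
have wZ := Sij_Z wS.
have nbcol : forall l, l != i -> forall z, z \in Sij t phi i l -> e w z -> phi z = l.
  move=> l li z; rewrite inE => /andP [zZ H] ewz.
  have zt : z != t by apply: contraNneq etw => <-; rewrite e_sym.
  rewrite (negbTE zt) /= in H; case/orP: H => /eqP // H.
  by have := Hp _ _ wZ zZ wt zt ewz; rewrite pw H eqxx.
have [j1 [j2 [j12 Ej]]] : exists j1 j2, j1 != j2 /\ [set z in Sij t phi i j | e w z] = [set j1; j2].
  by apply/cards2P; rewrite (F_deg St ij ir jr wD).
have [k1 [k2 [k12 Ek]]] : exists k1 k2, k1 != k2 /\ [set z in Sij t phi i k | e w z] = [set k1; k2].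
  by apply/cards2P; rewrite (F_deg St ik ir kr wD').
have j1in : j1 \in [set z in Sij t phi i j | e w z] by rewrite Ej !inE eqxx.
have j2in : j2 \in [set z in Sij t phi i j | e w z] by rewrite Ej !inE eqxx orbT.
have k1in : k1 \in [set z in Sij t phi i k | e w z] by rewrite Ek !inE eqxx.
have k2in : k2 \in [set z in Sij t phi i k | e w z] by rewrite Ek !inE eqxx orbT.
move: (j1in); rewrite in_set => /andP [j1S ewj1].
move: (j2in); rewrite in_set => /andP [j2S ewj2].
move: (k1in); rewrite in_set => /andP [k1S ewk1].
move: (k2in); rewrite in_set => /andP [k2S ewk2].
have ji : j != i by rewrite eq_sym.
have ki : k != i by rewrite eq_sym.
have pj1 := nbcol _ ji _ j1S ewj1.
have pj2 := nbcol _ ji _ j2S ewj2.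
have pk1 := nbcol _ ki _ k1S ewk1.
have pk2 := nbcol _ ki _ k2S ewk2.
have j1Z := Sij_Z j1S. have j2Z := Sij_Z j2S. have k1Z := Sij_Z k1S. have k2Z := Sij_Z k2S.
have j1k2 : j1 != k2 by apply/eqP => E; move: jk; rewrite -pj1 -pk2 E eqxx.
have k1j2 : k1 != j2 by apply/eqP => E; move: jk; rewrite -pj2 -pk1 E eqxx.
have j2k2 : j2 != k2 by apply/eqP => E; move: jk; rewrite -pj2 -pk2 E eqxx.
have [c [cr ci cfree]] : exists c, [/\ c < r, c != i & forall z, z \in Z -> e w z -> phi z != c].
  case: (boolP [exists c : 'I_r, (val c != i) &&
      [forall z, ((z \in Z) && e w z) ==> (phi z != c)]]).
    move=> /existsP [c /andP [ci /forallP H]]; exists c; split => //.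
    by move=> z zZ ewz; move: (H z); rewrite zZ ewz.
  move/existsPn => Hn; exfalso.
  have : size (rem i (iota 0 r)) <= #|[set z in Z | e w z] :\ j2 :\ k2|.
    apply: (cover_count (c := phi)); first by apply: rem_uniq; exact: iota_uniq.
    move=> l; rewrite (mem_rem_uniq _ (iota_uniq 0 r)) inE => /andP [li].
    rewrite mem_iota add0n => /andP[_ lr].
    have : exists2 z, (z \in Z) && e w z & phi z = l.
      move: (Hn (Ordinal lr)); rewrite /= li /= => /forallPn [z].
      by rewrite negb_imply negbK => /andP [H /eqP pz]; exists z.
    case=> z /andP [zZ ewz] pz.
    case: (eqVneq z j2) => [zj2|zj2].
      subst z; exists j1; last by rewrite pj1 -pj2.
      by rewrite !inE j1k2 j12 j1Z ewj1.
    case: (eqVneq z k2) => [zk2|zk2].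
      subst z; exists k1; last by rewrite pk1 -pk2.
      by rewrite !inE k12 k1j2 k1Z ewk1.
    by exists z => //; rewrite !inE zk2 zj2 zZ ewz.
  rewrite size_rem ?mem_iota ?add0n ?ir // size_iota.
  have HN : #|[set z in Z | e w z]| <= r := H1 wZ.
  move: HN; rewrite (cardsD1 j2 [set z in Z | e w z]) (cardsD1 k2 ([set z in Z | e w z] :\ j2)).
  rewrite !inE j2Z ewj2 k2Z ewk2 (eq_sym k2) j2k2 /=.
  move: ir; rewrite -subn1; move: (#|[set z in Z | e w z] :\ j2 :\ k2|) => m.
  clear -m; lia.
have cj : c != j by apply: contraTneq (cfree _ j1Z ewj1) => ->; rewrite pj1 eqxx.
pose phi2 := fun v => if v == w then c else phi v.
have St2 : State t phi2.
  split => //.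
    by move=> v vZ vt; rewrite /phi2; case: eqP => _; [exact: cr | exact: Hb].
  move=> u v uZ vZ ut vt euv; rewrite /phi2.
  case: (eqVneq u w) => [eu|uw]; case: (eqVneq v w) => [ev|vw].
  - by subst; rewrite e_irr in euv.
  - by subst; rewrite eq_sym; apply: cfree.
  - by subst; apply: cfree; rewrite // e_sym.
  - exact: Hp.
have S2E : Sij t phi2 i j = Sij t phi i j :\ w.
  apply/setP => v; rewrite !inE /phi2.
  case: (eqVneq v w) => [->|vw] //=.
  by rewrite (negbTE wt) (negbTE ci) (negbTE cj) andbF.
have [y yD2 yN] : exists2 y, y \in component e t (Sij t phi2 i j) &
     y \in [set z in Sij t phi i j | e w z].
  case: (boolP [exists y, (y \in component e t (Sij t phi2 i j)) &&
     (y \in [set z in Sij t phi i j | e w z])]).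
    by move=> /existsP [y /andP [? ?]]; exists y.
  move=> /existsPn Hn; exfalso.
  have : w \in component e t (Sij t phi2 i j).
    move: wD; rewrite inE => wD.
    apply: (conn_ind (P := fun y => y \in component e t (Sij t phi2 i j))) wD.
      exact: comp_refl.
    move=> u v uD /= /and3P [uS vS euv].
    have uS2 : u \in Sij t phi2 i j.
      by case: (comp_sub uD) => [->|//]; exact: tS.
    case: (eqVneq v w) => [vw|vw].
      subst v; move: (Hn u); rewrite uD /= inE uS /= e_sym euv.
      by [].
    apply: comp_closed uD uS2 _ euv.
    by rewrite S2E in_setD1 vw.
  case/comp_sub => [wt'|]; first by rewrite wt' eqxx in wt.
  by rewrite S2E in_setD1 eqxx.
move: (yN); rewrite in_set => /andP [yS ewy].
have yD : y \in component e t (Sij t phi i j) := comp_closed wD wS yS ewy.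
have d1 := F_deg St ij ir jr yD.
have d2 := F_deg St2 ij ir jr yD2.
move: d2; rewrite S2E.
have -> : [set z in Sij t phi i j :\ w | e y z] = [set z in Sij t phi i j | e y z] :\ w.
  by apply/setP => z; rewrite in_set !in_setD1 in_set andbA.
move: d1; rewrite (cardsD1 w [set z in Sij t phi i j | e y z]) in_set wS e_sym ewy /=.
by move=> E1 E2; rewrite E2 in E1.
Qed.

Lemma adj_nbrs s phi (a b c : nat) va vb : State s phi -> a != b -> a != c -> b != c ->
  a < r -> b < r -> c < r -> va \in Z -> vb \in Z -> e s va -> e s vb ->
  phi va = a -> phi vb = b -> e va vb.
Proof.
move=> St ab ac bc ar br cr vaZ vbZ esa esb pa pb.
apply/negPn/negP => nab.
have sZ := State_Z St. case: (St) => _ Hb Hp.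
have vas : va != s by apply: contraTneq esa => ->; rewrite e_irr.
have vbs : vb != s by apply: contraTneq esb => ->; rewrite e_irr.
have vaS : va \in Sij s phi a b by rewrite inE vaZ pa eqxx orbT.
have vaD : va \in component e s (Sij s phi a b).
  exact: comp_closed (comp_refl e s _) (tS _ _ St) vaS esa.
have Nva := F_deg St ab ar br vaD.
have sN : s \in [set z in Sij s phi a b | e va z] by rewrite in_set (tS _ _ St) e_sym esa.
have [u Eu] : exists u, [set z in Sij s phi a b | e va z] :\ s = [set u].
  by apply/cards1P; move: Nva; rewrite (cardsD1 s) sN add1n => [[->]].
have NE : [set z in Sij s phi a b | e va z] = [set s; u] by rewrite -(setD1K sN) Eu.
have uN : u \in [set z in Sij s phi a b | e va z] by rewrite NE !inE eqxx orbT.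
have us : u != s by have := set11 u; rewrite -Eu in_setD1 => /andP [].
move: (uN); rewrite in_set => /andP [uS evu].
have uZ := Sij_Z uS.
have pu : phi u = b.
  move: uS; rewrite inE (negbTE us) /= => /andP [_ /orP [/eqP H|/eqP //]].
  by have := Hp _ _ vaZ uZ vas us evu; rewrite pa H eqxx.
have uvb : u != vb by apply: contraNneq nab => <-.
have nsu : ~~ e s u.
  apply/negP => esu; have := P_uniq St uZ vbZ esu esb (etrans pu (esym pb)).
  by move=> E; rewrite E eqxx in uvb.
pose Dac := component e s (Sij s phi a c).
pose phi' := fun v => if (v \in Dac) && (v != s) then (if phi v == a then c else a) else phi v.
have Dac_col : forall v, v \in Dac -> v != s -> (phi v == a) || (phi v == c).
  move=> v vD vs; have := comp_subS (tS _ _ St) vD.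
  by rewrite inE (negbTE vs) /= => /andP [_ H].
have Dac_cl : forall v w, v \in Dac -> v != s -> w \in Z -> w != s -> e v w -> w \notin Dac ->
    ~~ ((phi w == a) || (phi w == c)).
  move=> v w vD vs wZ ws evw; apply: contra => H.
  have vS : v \in Sij s phi a c.
    by rewrite inE (Sij_Z (comp_subS (tS _ _ St) vD)) (negbTE vs) /= Dac_col.
  have wS : w \in Sij s phi a c by rewrite inE wZ (negbTE ws) /= H.
  exact: (comp_closed vD vS wS evw).
have St' : State s phi'.
  split => //.
    move=> v vZ vs; rewrite /phi'; case: ifP => _; last exact: Hb.
    by case: ifP.
  move=> x y xZ yZ xs ys exy; rewrite /phi' (negbTE xs) (negbTE ys) !andbT.
  have Hxy := Hp _ _ xZ yZ xs ys exy.
  have sw : forall p q, (p == a) || (p == c) -> (q == a) || (q == c) -> p != q ->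
      (if p == a then c else a) != (if q == a then c else a).
    move=> p q /orP [/eqP -> | /eqP ->] /orP [/eqP -> | /eqP ->];
      rewrite ?eqxx // (eq_sym c a) (negbTE ac) // eq_sym //.
  have sw2 : forall p q, (p == a) || (p == c) -> ~~ ((q == a) || (q == c)) ->
      (if p == a then c else a) != q.
    move=> p q _ Hq; apply/eqP => E; move: Hq; rewrite -E.
    by case: ifP; rewrite eqxx ?orbT.
  case xD: (x \in Dac); case yD: (y \in Dac).
  + exact: sw (Dac_col _ xD xs) (Dac_col _ yD ys) Hxy.
  + exact: sw2 (Dac_col _ xD xs) (Dac_cl _ _ xD xs yZ ys exy (negbT yD)).
  + by rewrite eq_sym; apply: sw2 (Dac_col _ yD ys) (Dac_cl _ _ yD ys xZ xs _ (negbT xD));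
      rewrite e_sym.
  + exact: Hxy.
have vaDac : va \in Dac.
  apply: comp_closed (comp_refl e s _) (tS _ _ St) _ esa.
  by rewrite inE vaZ pa eqxx orbT.
have pva' : phi' va = c by rewrite /phi' vaDac vas pa eqxx.
have uDac : u \notin Dac.
  apply/negP => uD; move: (Dac_col _ uD us); rewrite pu.
  by rewrite (negbTE bc) eq_sym (negbTE ab).
have pu' : phi' u = b by rewrite /phi' (negbTE uDac) pu.
have uDbc : u \in component e s (Sij s phi' b c).
  have vaD' : va \in component e s (Sij s phi' b c).
    apply: comp_closed (comp_refl e s _) (tS _ _ St') _ esa.
    by rewrite inE vaZ pva' eqxx orbT.
  apply: comp_closed vaD' _ _ evu.
    by rewrite inE vaZ pva' eqxx orbT.
  by rewrite inE uZ pu' eqxx orbT.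
pose Q := component e s (Sij s phi a b) :\ va.
have QS : Q \subset Sij s phi' b a.
  apply/subsetP => y; rewrite in_setD1 => /andP [yva yD].
  have yS := comp_subS (tS _ _ St) yD; have yZ := Sij_Z yS.
  case: (eqVneq y s) => [->|ys]; first exact: tS St'.
  have yDac : y \notin Dac.
    apply/negP => yDac; have Hac := Dac_col _ yDac ys.
    move: (yS); rewrite inE (negbTE ys) /= => /andP [_ Hy].
    have pya : phi y = a.
      case/orP: Hy => /eqP // Hb'; move: Hac; rewrite Hb'.
      by rewrite (negbTE bc) eq_sym (negbTE ab).
    apply: (LemB St ab ac bc ar br cr yD yDac ys _ pya).
    apply/negP => esy; have := P_uniq St yZ vaZ esy esa (etrans pya (esym pa)).
    by move=> E; rewrite E eqxx in yva.
  move: yS; rewrite !inE /phi' (negbTE yDac) (negbTE ys) /= => /andP [-> Hy].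
  by rewrite orbC.
have uQ : u \in component e s Q.
  apply: (two_ends e_sym e_irr).
  - by rewrite /Q in_setD1 eq_sym vas comp_refl.
  - by rewrite eq_sym.
  move=> y yC.
  have sQ : s \in Q by rewrite /Q in_setD1 eq_sym vas comp_refl.
  move: (comp_subS sQ yC); rewrite in_setD1 => /andP [yva yD].
  have yS := comp_subS (tS _ _ St) yD.
  have -> : [set z in Q | e y z] = [set z in Sij s phi a b | e y z] :\ va.
    apply/setP => z; rewrite /Q in_set !in_setD1 in_set; apply/idP/idP.
      move=> /andP [/andP [-> zD] ->]; by rewrite (comp_subS (tS _ _ St) zD).
    move=> /andP [-> /andP [zS eyz]]; rewrite eyz andbT /=.
    exact: comp_closed yD yS zS eyz.
  move: (F_deg St ab ar br yD); rewrite (cardsD1 va) in_set vaS /= e_sym.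
  have -> : e va y = (y == s) || (y == u).
    apply/idP/idP => [evy|].
      have : y \in [set z in Sij s phi a b | e va z] by rewrite in_set yS evy.
      by rewrite NE !inE.
    by case/orP => /eqP ->; [rewrite e_sym | ].
  case: (eqVneq y s) => [ys|ys]; case: (eqVneq y u) => [yu|yu] /=.
  - by move: us; rewrite -yu ys eqxx.
  - by move=> <-; rewrite ?addn0 ?add0n ?addKn ?subn0.
  - by move=> <-; rewrite ?addn0 ?add0n ?addKn ?subn0.
  - by move=> <-; rewrite ?addn0 ?add0n ?addKn ?subn0.
have uDba : u \in component e s (Sij s phi' b a) := comp_mono QS uQ.
apply: (LemB St' _ _ ac br ar cr uDba uDbc us nsu pu').
  by rewrite eq_sym.
exact: bc.
Qed.

Lemma card2_mem (A : {set T}) x y z : #|A| = 2 -> x \in A -> y \in A -> x != y -> z \in A ->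
  (z == x) || (z == y).
Proof.
move=> cA xA yA xy zA.
have sub : [set x; y] \subset A by apply/subsetP => w; rewrite !inE => /orP [] /eqP ->.
have cc : #|[set x; y]| = #|A| by rewrite cards2 xy cA.
have E := elimT (subset_cardP cc) sub.
by move: zA; rewrite -E !inE.
Qed.

Lemma third_color (a b : nat) : a != b -> exists c, [/\ c < 3, a != c & b != c].
Proof.
case: a => [|[|[|a]]]; case: b => [|[|[|b]]] //= _;
  first [by exists 0 | by exists 1 | by exists 2].
Qed.

Lemma brooks_complete s phi : State s phi -> 3 <= r ->
  (forall Y : {set T}, s \in Y -> (forall y z, y \in Y -> z \in Z -> e y z -> z \in Y) ->
     Z \subset Y) -> complete_on e Z.
Proof.
move=> St r3 Hconn.
have sZ := State_Z St; case: (St) => _ Hb Hp.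
have clique : forall y1 y2, y1 \in Z -> y2 \in Z -> e s y1 -> e s y2 -> y1 != y2 -> e y1 y2.
  move=> y1 y2 y1Z y2Z e1 e2 y12.
  have y1s : y1 != s by apply: contraTneq e1 => ->; rewrite e_irr.
  have y2s : y2 != s by apply: contraTneq e2 => ->; rewrite e_irr.
  have ab : phi y1 != phi y2.
    by apply/eqP => E; rewrite (P_uniq St y1Z y2Z e1 e2 E) eqxx in y12.
  have ar := Hb _ y1Z y1s; have br := Hb _ y2Z y2s.
  have [c [c3 ac bc]] := third_color ab.
  exact: (adj_nbrs St ab ac bc ar br (leq_trans c3 r3) y1Z y2Z e1 e2 (erefl _) (erefl _)).
pose N := [set y in Z | e s y].
have cN : r <= #|N|.
  rewrite -[r](size_iota 0); apply: (cover_count (c := phi)) (iota_uniq 0 r) _.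
  move=> j; rewrite mem_iota add0n => /andP[_ jr].
  have [y /andP[yZ ety] <-] := P_exist St jr.
  by exists y; rewrite // inE yZ ety.
pose Y := s |: N.
have YZ : forall y, y \in Y -> y \in Z by move=> y; rewrite !inE => /orP [/eqP ->|/andP []].
have Hcl : forall y z, y \in Y -> z \in Z -> e y z -> z \in Y.
  move=> y z; rewrite in_setU1 => /orP [/eqP ->|yN] zZ eyz.
    by rewrite in_setU1 in_set zZ eyz orbT.
  move: (yN); rewrite in_set => /andP [yZ esy].
  apply/negPn/negP => zY.
  have sub : z |: (Y :\ y) \subset [set w in Z | e y w].
    apply/subsetP => w; rewrite /Y /N in_setU1 in_setD1 => /orP [/eqP ->|/andP [wy]].
      by rewrite in_set zZ eyz.
    rewrite in_setU1 => /orP [/eqP ->|wN]; first by rewrite in_set sZ e_sym esy.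
    move: wN; rewrite in_set => /andP [wZ esw].
    by rewrite in_set wZ (clique _ _ yZ wZ esy esw); rewrite // eq_sym.
  have := subset_leq_card sub; have := H1 yZ.
  rewrite cardsU1 in_setD1 (negbTE zY) andbF /=.
  have : #|Y| = (#|Y :\ y|).+1 by rewrite (cardsD1 y Y) in_setU1 yN orbT.
  have : #|Y| = (#|N|).+1 by rewrite cardsU1 in_set e_irr andbF.
  move: cN; move: #|N| #|Y| #|Y :\ y| #|[set w in Z | e y w]| => n1 n2 n3 n4.
  clear; lia.
have ZY : Z \subset Y by apply: Hconn => //; rewrite in_setU1 eqxx.
move=> u v uZ vZ uv.
move: (subsetP ZY u uZ) (subsetP ZY v vZ); rewrite !in_setU1 !in_set.
case/orP => [/eqP eu|/andP [_ esu]]; case/orP => [/eqP ev|/andP [_ esv]].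
- by rewrite eu ev eqxx in uv.
- by rewrite eu.
- by rewrite ev e_sym.
- exact: clique.
Qed.

Lemma brooks_cycle x phi : State x phi -> r = 2 ->
  (forall y, y \in Z -> y \in component e x Z) -> odd_cycle_on e Z.
Proof.
move=> St r2 Hconn.
have xZ := State_Z St; case: (St) => _ Hb Hp.
have S01 : Sij x phi 0 1 = Z.
  apply/setP => v; rewrite inE; case vZ: (v \in Z) => //=.
  case: (eqVneq v x) => //= vx; have := Hb v vZ vx; rewrite r2.
  by case: (phi v) => [|[|]].
have deg2 : forall y, y \in Z -> #|[set z in Z | e y z]| = 2.
  move=> y yZ; rewrite -S01; apply: F_deg St _ _ _ _; rewrite ?r2 //.
  by rewrite S01; exact: Hconn.
have r0 : 0 < r by rewrite r2.
have r1 : 1 < r by rewrite r2.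
have [v0 /andP [v0Z ev0] p0] := P_exist St r0.
have [v1 /andP [v1Z ev1] p1] := P_exist St r1.
have v01 : v0 != v1 by apply/eqP => E; move: p0; rewrite E p1.
have v0x : v0 != x by apply: contraTneq ev0 => ->; rewrite e_irr.
have v1x : v1 != x by apply: contraTneq ev1 => ->; rewrite e_irr.
have nbx : forall y, y \in Z -> e x y = (y == v0) || (y == v1).
  move=> y yZ; apply/idP/idP => [exy|/orP [/eqP->|/eqP->] //].
  have yx : y != x by apply: contraTneq exy => ->; rewrite e_irr.
  have := Hb y yZ yx; rewrite r2.
  case E: (phi y) => [|[|]] // _.
    by rewrite (P_uniq St yZ v0Z exy ev0 (etrans E (esym p0))) eqxx.
  by rewrite (P_uniq St yZ v1Z exy ev1 (etrans E (esym p1))) eqxx orbT.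
have v0Q : v0 \in Z :\ x by rewrite in_setD1 v0x.
have v1C : v1 \in component e v0 (Z :\ x).
  apply: (two_ends e_sym e_irr) => //.
  move=> y yC; have yQ := comp_subS v0Q yC; move: (yQ); rewrite in_setD1 => /andP [yx yZ].
  have -> : [set z in Z :\ x | e y z] = [set z in Z | e y z] :\ x.
    by apply/setP => z; rewrite in_set !in_setD1 in_set andbA.
  move: (deg2 y yZ); rewrite (cardsD1 x) in_set xZ /= e_sym (nbx y yZ).
  case: (eqVneq y v0) => [yv0|yv0]; case: (eqVneq y v1) => [yv1|yv1] /=.
  - by move: v01; rewrite -yv0 -yv1 eqxx.
  - by move=> <-; rewrite ?addn0 ?add0n ?addKn ?subn0.
  - by move=> <-; rewrite ?addn0 ?add0n ?addKn ?subn0.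
  - by move=> <-; rewrite ?addn0 ?add0n ?addKn ?subn0.
pose relQ := [rel u v | [&& u \in Z :\ x, v \in Z :\ x & e u v]].
have [p [pth up lastp]] : exists p, [/\ path relQ v0 p, uniq (v0 :: p) & v1 = last v0 p].
  move: v1C; rewrite inE => /connectP [p0' pth ->].
  by case: (shortenP pth) => p' pth' up' _; exists p'.
have pQ : forall u q, path relQ u q -> forall w, w \in q -> w \in Z :\ x.
  move=> u q; elim: q u => [|w q IH] u //= /andP [/and3P [_ wQ _] pth'] z.
  by rewrite inE => /orP [/eqP -> //| zq]; exact: IH pth' z zq.
have alt : forall u q, u \in Z :\ x -> path relQ u q -> phi (last u q) = (phi u + size q) %% 2.
  move=> u q; elim: q u => [|w q IH] u uQ /=.
    move: uQ; rewrite in_setD1 => /andP [ux uZ] _; rewrite addn0 modn_small //.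
    by rewrite -r2; exact: Hb.
  move=> /andP [/and3P [_ wQ euw] pth']; rewrite IH //.
  move: uQ wQ; rewrite !in_setD1 => /andP [ux uZ] /andP [wx wZ].
  move: (Hb u uZ ux) (Hb w wZ wx) (Hp u w uZ wZ ux wx euw); rewrite r2.
  case: (phi u) => [|[|]] //; case: (phi w) => [|[|]] //= _ _ _.
  all: try by rewrite add0n add1n -addn2 modnDr.
have oddp : odd (size p).
  have := alt v0 p v0Q pth; rewrite -lastp p1 p0 add0n => E.
  by move: E; rewrite modn2; case: (odd _).
pose s := x :: v0 :: p.
have us : uniq s.
  rewrite /s cons_uniq up andbT inE negb_or eq_sym v0x /=.
  by apply/negP => /(pQ _ _ pth); rewrite in_setD1 eqxx.
have ss : 3 <= size s by rewrite /s /=; case: (p) oddp.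
have sZ : forall y, y \in s -> y \in Z.
  move=> y; rewrite /s !inE => /orP [/eqP -> //| /orP [/eqP -> //| yp]].
  by move: (pQ _ _ pth y yp); rewrite in_setD1 => /andP [].
have cyc : cycle e s.
  rewrite /s /= ev0 /= rcons_path -lastp e_sym ev1 andbT.
  by apply: sub_path pth => u v /= /and3P [].
have nbr : forall u z, u \in s -> z \in Z -> e u z -> (z == next s u) || (z == prev s u).
  move=> u z us' zZ euz.
  apply: (card2_mem (deg2 u (sZ u us'))).
  - by rewrite in_set (sZ _ _) ?mem_next // next_cycle.
  - by rewrite in_set (sZ _ _) ?mem_prev // e_sym prev_cycle.
  - exact: next_neq_prev.
  - by rewrite in_set zZ euz.
have Zs : Z = [set y in s].
  apply/setP => y; rewrite in_set; apply/idP/idP; last exact: sZ.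
  move=> yZ; move: (Hconn y yZ); rewrite inE.
  apply: (conn_ind (P := fun y => y \in s)); first by rewrite /s mem_head.
  move=> u v us' /= /and3P [_ vZ euv].
  by case/orP: (nbr u v us' vZ euv) => /eqP ->; rewrite ?mem_next ?mem_prev.
exists s; split => //.
  by rewrite /s /= negbK.
move=> u v us' vs'; apply/idP/idP => [euv|].
  case/orP: (nbr u v us' (sZ v vs') euv) => [->//|/eqP ->].
  by rewrite next_prev // eqxx orbT.
case/orP => /eqP ->; first exact: next_cycle.
by rewrite e_sym; apply: next_cycle.
Qed.
End Brooks.
Section Nedges.
Variables (T : finType) (e : rel T).
Hypothesis e_sym : symmetric e.
Hypothesis e_irr : irreflexive e.

Lemma nedges_add (A : {set T}) z : z \notin A ->
  nedges e (z |: A) = nedges e A + #|[set y in A | e z y]|.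
Proof.
move=> zA.
pose isE (E : {set T}) := [exists u, exists v, (E == [set u; v]) && (u != v) && e u v].
pose B := [set [set z; y] | y in [set y in A | e z y]].
have split : [set E : {set T} | (E \subset z |: A) && isE E] =
    [set E : {set T} | (E \subset A) && isE E] :|: B.
  apply/setP => E; rewrite !inE; apply/idP/idP.
    move=> /andP [sub isEE].
    case: (boolP (z \in E)) => zE; last first.
      apply/orP; left; rewrite isEE andbT; apply/subsetP => w wE.
      move: (subsetP sub w wE); rewrite in_setU1 => /orP [/eqP wz|//].
      by rewrite -wz wE in zE.
    apply/orP; right.
    move: (isEE) => /existsP [u /existsP [v /andP [/andP [/eqP EE uv] euv]]].
    have [w [Ew wz ezw]] : exists w, [/\ E = [set z; w], w != z & e z w].
      move: zE; rewrite EE !inE => /orP [/eqP zu|/eqP zv].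
        by exists v; rewrite zu; split => //; rewrite eq_sym.
      by exists u; rewrite zv setUC; split => //; rewrite e_sym.
    apply/imsetP; exists w => //.
    have : w \in E by rewrite Ew !inE eqxx orbT.
    move=> /(subsetP sub); rewrite in_setU1 (negbTE wz) /= => wA.
    by rewrite in_set wA ezw.
  case/orP => [/andP [sub ->]|/imsetP [y]]; rewrite ?andbT.
    apply/subsetP => w /(subsetP sub) wA; by rewrite in_setU1 wA orbT.
  rewrite in_set => /andP [yA ezy] ->.
  have zy : z != y by apply: contraNneq zA => ->.
  apply/andP; split.
    apply/subsetP => w; rewrite !inE => /orP [->//|/eqP ->]; by rewrite yA orbT.
  by apply/existsP; exists z; apply/existsP; exists y; rewrite eqxx zy ezy.
rewrite /nedges -/isE split cardsU.
have -> : [set E : {set T} | (E \subset A) && isE E] :&: B = set0.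
  apply/setP => E; rewrite !inE; apply/negP => /andP [/andP [sub _] /imsetP [y _ Ey]].
  by move: (subsetP sub z); rewrite Ey !inE eqxx => /(_ isT); rewrite (negbTE zA).
rewrite cards0 subn0 card_in_imset //.
move=> y1 y2; rewrite !inE => /andP [y1A _] /andP [y2A _] E.
have : y1 \in [set z; y2] by rewrite -E !inE eqxx orbT.
rewrite !inE => /orP [/eqP y1z|/eqP //].
by rewrite -y1z y1A in zA.
Qed.
End Nedges.
Section Main.
Variables (T : finType) (e : rel T).
Hypothesis e_sym : symmetric e.
Hypothesis e_irr : irreflexive e.
Variables (a : nat) (r : 'I_a -> nat).
Hypothesis Hsum : 1 + \sum_(i < a) r i = chi e.

Definition off (m : nat) := \sum_(l < a | l < m) r l.

Lemma off_step (i : 'I_a) : off i.+1 = off i + r i.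
Proof.
rewrite /off (bigD1 i) //= addnC; congr (_ + _); apply: eq_bigl => l.
by rewrite ltnS -val_eqE ltn_neqAle andbC.
Qed.

Lemma off_mono m n : m <= n -> off m <= off n.
Proof.
move=> mn; rewrite /off [X in X <= _]big_mkcond [X in _ <= X]big_mkcond /=.
apply: leq_sum => l _; case: ifP => lm; case: ifP => ln //.
by rewrite (leq_trans lm mn) in ln.
Qed.

Lemma off_a : off a = \sum_(i < a) r i.
Proof. by apply: eq_bigl => l; rewrite ltn_ord. Qed.

Definition enc (i : 'I_a) j := off i + j.

Lemma enc_lt i j : j < r i -> enc i j < \sum_(l < a) r l.
Proof.
move=> jr; rewrite -off_a; apply: leq_trans (off_mono (ltn_ord i)).
by rewrite off_step /enc ltn_add2l.
Qed.

Lemma enc_lt_off i j : j < r i -> enc i j < off i.+1.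
Proof. by move=> jr; rewrite off_step /enc ltn_add2l. Qed.

Lemma enc_inj i j i' j' : j < r i -> j' < r i' -> enc i j = enc i' j' -> i = i' /\ j = j'.
Proof.
move=> jr jr' E.
case: (ltngtP i i') => [lt|lt|eq].
- have := leq_trans (enc_lt_off jr) (off_mono lt).
  by rewrite E /enc ltnNge leq_addr.
- have := leq_trans (enc_lt_off jr') (off_mono lt).
  by rewrite -E /enc ltnNge leq_addr.
- have ii : i = i' by apply: val_inj.
  by subst; split => //; move: E; rewrite /enc => /addnI.
Qed.

Lemma chi_bound (c : T -> nat) : (forall v, c v < \sum_(i < a) r i) ->
  (forall u v, e u v -> c u != c v) -> False.
Proof.
move=> cb cp.
have Hs := Hsum.
set K := \sum_(i < a) r i in cb Hs.
have cbS : forall v, c v < K.+1 by move=> v; exact: ltnW (cb v).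
have col : colorable_on e setT K.
  apply/existsP; exists [ffun v => inord (c v)]; apply/andP; split.
    apply/forall_inP => u _; rewrite ffunE inordK //; exact: ltnW (cb u).
  apply/forall_inP => u _; apply/forall_inP => v _; apply/implyP => /andP [_ euv].
  rewrite !ffunE; apply/negP => /eqP /(congr1 val).
  rewrite /= !inordK ?cbS //.
  by move/eqP; rewrite (negbTE (cp _ _ euv)).
have Hm : forall n, colorable_on e setT n -> chi e <= n.
  by rewrite /chi /chi_on; case: ex_minnP.
by have := Hm K col; rewrite -Hs ltnn.
Qed.

Definition encv (g : T -> option ('I_a * nat)) v := if g v is Some (i, j) then enc i j else 0.

Lemma pcol_Some t g v : pcol e r t g -> v != t -> exists i j, g v = Some (i, j) /\ j < r i.
Proof.
case=> H1 H2 _ _ vt; case E: (g v) => [[i j]|].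
  by exists i, j; split => //; exact: H2 E.
by move: (H1 v); rewrite E eqxx (negbTE vt).
Qed.

Lemma encv_lt t g v : pcol e r t g -> v != t -> encv g v < \sum_(i < a) r i.
Proof.
move=> Pg vt; have [i [j [E jr]]] := pcol_Some Pg vt.
by rewrite /encv E; exact: enc_lt.
Qed.

Lemma encv_inj t g u v : pcol e r t g -> u != t -> v != t -> encv g u = encv g v -> g u = g v.
Proof.
move=> Pg ut vt; have [i [j [E jr]]] := pcol_Some Pg ut.
have [i' [j' [E' jr']]] := pcol_Some Pg vt.
rewrite /encv E E' => /(enc_inj jr jr') [-> ->] //.
Qed.

Lemma pcol_full t g (i : 'I_a) j : pcol e r t g -> j < r i -> exists v, g v = Some (i, j) /\ e t v.
Proof.
move=> Pg jr.
case: (boolP [exists v, (g v == Some (i, j)) && e t v]).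
  by move=> /existsP [v /andP [/eqP E etv]]; exists v.
move=> /existsPn Hn; exfalso.
case: (Pg) => P1 P2 P3 P4.
apply: (chi_bound (c := fun v => if v == t then enc i j else encv g v)).
  by move=> v; case: eqP => [_|/eqP vt]; [exact: enc_lt | exact: encv_lt Pg vt].
move=> u v euv.
have uv : u != v by apply: contraTneq euv => ->; rewrite e_irr.
case: (eqVneq u t) => [ut|ut]; case: (eqVneq v t) => [vt|vt].
- by rewrite ut vt eqxx in uv.
- subst u; have [i' [j' [E jr']]] := pcol_Some Pg vt.
  rewrite /encv E; apply/eqP => /(enc_inj jr jr') [ii jj].
  by move: (Hn v); rewrite E ii jj eqxx euv.
- subst v; have [i' [j' [E jr']]] := pcol_Some Pg ut.
  rewrite /encv E; apply/eqP => /esym /(enc_inj jr jr') [ii jj].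
  by move: (Hn u); rewrite E ii jj eqxx e_sym euv.
- apply/eqP => /(encv_inj Pg ut vt) E.
  by move: (P4 _ _ euv); rewrite E eqxx.
Qed.
End Main.
Section Main2.
Variables (T : finType) (e : rel T).
Hypothesis e_sym : symmetric e.
Hypothesis e_irr : irreflexive e.
Variables (a : nat) (r : 'I_a -> nat).
Hypothesis Hsum : 1 + \sum_(i < a) r i = chi e.
Hypothesis r_pos : forall i, 0 < r i.
Variables (x : T) (f : T -> option ('I_a * nat)) (i : 'I_a).
Hypothesis Hf : pcol e r x f.
Hypothesis Hmin : forall (x' : T) (f' : T -> option ('I_a * nat)),
            pcol e r x' f' -> pcost e f <= pcost e f'.

Lemma step u v g : pcol e r u g -> pcost e g = pcost e f -> u |: Upart g i = x |: Upart f i ->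
  #|[set z in x |: Upart f i | e u z]| <= r i -> v \in x |: Upart f i -> e u v ->
  exists g', [/\ pcol e r v g', pcost e g' = pcost e f, v |: Upart g' i = x |: Upart f i &
     #|[set z in x |: Upart f i | e v z]| <= r i].
Proof.
set W := x |: Upart f i; clearbody W.
move=> Pg cg Wg dg vW euv.
have uv : u != v by apply: contraTneq euv => ->; rewrite e_irr.
case: (Pg) => P1 P2 P3 P4.
have gu : g u = None by apply/eqP; rewrite P1.
have uU : u \notin Upart g i by rewrite inE gu.
have vU : v \in Upart g i.
  by move: vW; rewrite -Wg in_setU1 => /orP [/eqP vu | //]; rewrite vu eqxx in uv.
have [j gv] : exists j, g v = Some (i, j).
  by move: vU; rewrite inE; case: (g v) => [[i' j]|] // /eqP ->; exists j.
have UW : forall w, w \in Upart g i -> w \in W by move=> w wU; rewrite -Wg in_setU1 wU orbT.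
have Ucol : forall w j', g w = Some (i, j') -> w \in Upart g i by move=> w j' E; rewrite inE E eqxx.
have uniqv : forall z, e u z -> g z = Some (i, j) -> z = v.
  move=> z euz gz; apply/eqP; apply/negPn/negP => zv.
  have : r i <= #|[set w in W | e u w] :\ z|.
    rewrite -[r i](size_iota 0).
    apply: (cover_count (c := fun w => if g w is Some (_, j') then j' else 0)) (iota_uniq 0 _) _.
    move=> j'; rewrite mem_iota add0n => /andP [_ jr].
    have [w [gw euw]] := pcol_full e_sym e_irr Hsum Pg jr.
    case: (eqVneq w z) => [wz|wz].
      exists v; last by rewrite gv; subst w; rewrite gw in gz; case: gz => ->.
      by rewrite in_setD1 in_set (eq_sym v z) zv vW euv.
    exists w; last by rewrite gw.
    by rewrite in_setD1 in_set wz (UW _ (Ucol _ _ gw)) euw.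
  move: dg; rewrite (cardsD1 z) in_set (UW _ (Ucol _ _ gz)) euz /=.
  have := r_pos i; move: (#|_ :\ z|) => m; clear; lia.
pose g' := fun w => if w == v then None else if w == u then g v else g w.
have g'S : forall w, w != v -> g' w != None.
  move=> w wv; rewrite /g' (negbTE wv); case: (eqVneq w u) => [_|wu]; first by rewrite gv.
  by rewrite P1.
have g'v : g' v = None by rewrite /g' eqxx.
have Pg' : pcol e r v g'.
  split.
  - move=> w; case: (eqVneq w v) => [->|wv]; first by rewrite /g' eqxx.
    by apply/negbTE; apply: g'S.
  - move=> w i' j'; rewrite /g'; case: (eqVneq w v) => // _.
    case: (eqVneq w u) => _ E; [exact: P2 E | exact: P2 E].
  - move=> i' j' jr; have [w gw] := P3 i' j' jr.
    case: (eqVneq w v) => [wv|wv].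
      by exists u; rewrite /g' (negbTE uv) eqxx -wv.
    exists w; rewrite /g' (negbTE wv); case: (eqVneq w u) => [wu|//].
    by rewrite wu gu in gw.
  - move=> w1 w2 e12.
    have w12 : w1 != w2 by apply: contraTneq e12 => ->; rewrite e_irr.
    case: (eqVneq w1 v) => [w1v|w1v].
      by rewrite w1v g'v eq_sym; apply: g'S; rewrite -w1v eq_sym.
    case: (eqVneq w2 v) => [w2v|w2v].
      by rewrite w2v g'v; apply: g'S.
    rewrite /g' (negbTE w1v) (negbTE w2v).
    case: (eqVneq w1 u) => [w1u|w1u]; case: (eqVneq w2 u) => [w2u|w2u].
    + by rewrite w1u w2u eqxx in w12.
    + subst w1; apply/eqP => E; move: w2v; rewrite (uniqv _ e12 (etrans (esym E) gv)).
      by rewrite eqxx.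
    + subst w2; apply/eqP => E; move: w1v.
      have euw1 : e u w1 by rewrite e_sym.
      by rewrite (uniqv w1 euw1 (etrans E gv)) eqxx.
    + exact: P4.
have U'i : Upart g' i = u |: (Upart g i :\ v).
  apply/setP => w; rewrite in_setU1 in_setD1 !inE /g'.
  case: (eqVneq w v) => [->|wv]; first by rewrite eq_sym (negbTE uv).
  case: (eqVneq w u) => [->|wu] /=; first by rewrite gv eqxx.
  by [].
have U'l : forall l, l != i -> Upart g' l = Upart g l.
  move=> l li; apply/setP => w; rewrite !inE /g'.
  case: (eqVneq w v) => [->|wv]; first by rewrite gv eq_sym (negbTE li).
  case: (eqVneq w u) => [->|wu] /=; first by rewrite gv gu eq_sym (negbTE li).
  by [].
have W' : v |: Upart g' i = W.
  rewrite -Wg U'i; apply/setP => w; rewrite !in_setU1 in_setD1.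
  case: (eqVneq w v) => [->|wv] /=; first by rewrite vU !orbT.
  by [].
have vU0 : v \notin (Upart g i :\ v) by rewrite in_setD1 eqxx.
have uU0 : u \notin (Upart g i :\ v) by rewrite in_setD1 (negbTE uU) andbF.
have cU : nedges e (Upart g i) = nedges e (Upart g i :\ v) + #|[set y in (Upart g i :\ v) | e v y]|.
  by rewrite -(nedges_add e_sym vU0) setD1K.
have cU' : nedges e (Upart g' i) = nedges e (Upart g i :\ v) + #|[set y in (Upart g i :\ v) | e u y]|.
  by rewrite U'i (nedges_add e_sym uU0).
have rest : \sum_(l < a | l != i) nedges e (Upart g' l) = \sum_(l < a | l != i) nedges e (Upart g l).
  by apply: eq_bigr => l li; rewrite U'l.
have pc : pcost e g = nedges e (Upart g i) + \sum_(l < a | l != i) nedges e (Upart g l).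
  by rewrite /pcost (bigD1 i).
have pc' : pcost e g' = nedges e (Upart g' i) + \sum_(l < a | l != i) nedges e (Upart g' l).
  by rewrite /pcost (bigD1 i).
set U := Upart g i in vU uU UW Ucol Wg vU0 uU0 cU cU' pc U'i *.
clearbody U.
have du : #|[set z in W | e u z]| = 1 + #|[set y in (U :\ v) | e u y]|.
  have -> : [set z in W | e u z] = v |: [set y in (U :\ v) | e u y].
    apply/setP => z; rewrite in_setU1 !in_set in_set1 -Wg in_setU1.
    case: (eqVneq z v) => [->|zv] /=; first by rewrite euv vU orbT.
    case: (eqVneq z u) => [->|zu] /=; first by rewrite e_irr andbF.
    by [].
  by rewrite cardsU1 in_set in_setD1 eqxx.
have dv : #|[set z in W | e v z]| = 1 + #|[set y in (U :\ v) | e v y]|.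
  have -> : [set z in W | e v z] = u |: [set y in (U :\ v) | e v y].
    apply/setP => z; rewrite in_setU1 !in_set in_set1 -Wg in_setU1.
    case: (eqVneq z u) => [->|zu] /=; first by rewrite e_sym euv.
    case: (eqVneq z v) => [->|zv] /=; first by rewrite e_irr andbF.
    by [].
  by rewrite cardsU1 in_set (negbTE uU0).
have lo : r i <= #|[set z in W | e v z]|.
  rewrite -[r i](size_iota 0).
  apply: (cover_count (c := fun w => if g' w is Some (_, j') then j' else 0)) (iota_uniq 0 _) _.
  move=> j'; rewrite mem_iota add0n => /andP [_ jr].
  have [w [gw evw]] := pcol_full e_sym e_irr Hsum Pg' jr.
  exists w; last by rewrite gw.
  by rewrite in_set -W' in_setU1 inE gw eqxx orbT evw.
have mn := Hmin Pg'; rewrite -cg pc pc' cU cU' rest in mn.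
exists g'; split => //.
  rewrite -cg pc pc' cU cU' rest.
  move: mn dg lo; rewrite du dv.
  move: (#|[set y in (U :\ v) | e v y]|) (#|[set y in (U :\ v) | e u y]|) (nedges e (U :\ v))
    (\sum_(l < a | l != i) nedges e (Upart g l)) => m1 m2 m3 m4; clear; lia.
move: mn dg lo; rewrite du dv.
move: (#|[set y in (U :\ v) | e v y]|) (#|[set y in (U :\ v) | e u y]|) (nedges e (U :\ v))
  (\sum_(l < a | l != i) nedges e (Upart g l)) => m1 m2 m3 m4; clear; lia.
Qed.
End Main2.

Unset Implicit Arguments. Set Strict Implicit. Set Printing Implicit Defensive.

Theorem lemma3p2 (T : finType) (e : rel T) (e_sym : symmetric e) (e_irr : irreflexive e)
  (Hcrit : exists v, critical e v)
  (a : nat) (r : 'I_a -> nat) (a_pos : 0 < a) (r_pos : forall i, 0 < r i)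
  (Hsum : 1 + \sum_(i < a) r i = chi e)
  (x : T) (f : T -> option ('I_a * nat)) (Hf : pcol e r x f)
  (Hmin : forall (x' : T) (f' : T -> option ('I_a * nat)),
            pcol e r x' f' -> pcost e f <= pcost e f')
  (i : 'I_a)
  (Hdeg : deg_in e (component e x (x |: Upart f i)) x = r i) :
  (3 <= r i -> complete_on e (component e x (x |: Upart f i))) /\
  (r i = 2 -> odd_cycle_on e (component e x (x |: Upart f i))).
Proof.
have xW : x \in x |: Upart f i by rewrite in_setU1 eqxx.
have ZW : forall y, y \in component e x (x |: Upart f i) -> y \in x |: Upart f i.
  by move=> y; exact: comp_subS xW.
have Zcl : forall u v, u \in component e x (x |: Upart f i) -> v \in x |: Upart f i -> e u v ->
    v \in component e x (x |: Upart f i).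
  by move=> u v uZ vW euv; exact: comp_closed uZ (ZW u uZ) vW euv.
have degW : forall y, y \in component e x (x |: Upart f i) ->
    #|[set z in x |: Upart f i | e y z]| <= r i.
  move=> y; rewrite inE => H.
  have H' : exists g, [/\ pcol e r y g,
      pcost e g = pcost e f, y |: Upart g i = x |: Upart f i &
      #|[set z in x |: Upart f i | e y z]| <= r i].
    apply: (conn_ind (P := fun y => exists g, [/\ pcol e r y g,
      pcost e g = pcost e f, y |: Upart g i = x |: Upart f i &
      #|[set z in x |: Upart f i | e y z]| <= r i])) H.
      exists f; split => //.
      rewrite -Hdeg /deg_in; apply: subset_leq_card; apply/subsetP => z.
      rewrite in_set => /andP [zW exz]; rewrite in_set exz andbT.
      exact: Zcl (comp_refl e x _) zW exz.
    move=> u v [g [Pg cg Wg dg]] /= /and3P [uW vW euv].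
    exact: (step e_sym e_irr Hsum r_pos Hmin Pg cg Wg dg vW euv).
  by case: H' => g [].
set W := x |: Upart f i in xW ZW Zcl degW *.
set Z := component e x W in ZW Zcl degW *.
have H1 : forall z, z \in Z -> #|[set y in Z | e z y]| <= r i.
  move=> z zZ; apply: leq_trans (degW z zZ); apply: subset_leq_card.
  apply/subsetP => y; rewrite in_set => /andP [yZ ezy]; rewrite in_set ezy andbT.
  exact: ZW.
have xZ : x \in Z by exact: comp_refl.
have UZ : forall v, v \in Z -> v != x -> exists j, f v = Some (i, j) /\ j < r i.
  move=> v vZ vx; have [i' [j [E jr]]] := pcol_Some Hf vx.
  have := ZW v vZ; rewrite /W in_setU1 (negbTE vx) /= inE E => /eqP ii.
  by exists j; rewrite -ii.
have H2 : forall g : T -> nat, (forall v, v \in Z -> g v < r i) ->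
    (forall u v, u \in Z -> v \in Z -> e u v -> g u != g v) -> False.
  move=> g gb gp.
  apply: (chi_bound Hsum (c := fun v => if v \in Z then enc r i (g v) else encv r f v)).
    move=> v; case: ifP => vZ; first exact: enc_lt (gb v vZ).
    apply: encv_lt Hf _; apply: contraFneq vZ => ->; exact: xZ.
  move=> u v euv.
  case uZ: (u \in Z); case vZ: (v \in Z).
  - apply/eqP => /(enc_inj (gb u uZ) (gb v vZ)) [_ E].
    by move: (gp u v uZ vZ euv); rewrite E eqxx.
  - have vx : v != x by apply: contraFneq vZ => ->.
    have [i' [j' [E jr']]] := pcol_Some Hf vx.
    rewrite /encv E; apply/eqP => /(enc_inj (gb u uZ) jr') [ii _].
    have vW : v \in W by rewrite /W in_setU1 inE E ii eqxx orbT.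
    by rewrite (Zcl u v uZ vW euv) in vZ.
  - have ux : u != x by apply: contraFneq uZ => ->.
    have [i' [j' [E jr']]] := pcol_Some Hf ux.
    rewrite /encv E; apply/eqP => /esym /(enc_inj (gb v vZ) jr') [ii _].
    have uW : u \in W by rewrite /W in_setU1 inE E ii eqxx orbT.
    have evu : e v u by rewrite e_sym.
    by rewrite (Zcl v u vZ uW evu) in uZ.
  - have ux : u != x by apply: contraFneq uZ => ->.
    have vx : v != x by apply: contraFneq vZ => ->.
    apply/eqP => /(encv_inj Hf ux vx) E.
    by case: Hf => _ _ _ P4; move: (P4 _ _ euv); rewrite E eqxx.
pose phi := fun v => if f v is Some (_, j) then j else 0.
have St : State e Z (r i) x phi.
  split => //.
    by move=> v vZ vx; have [j [E jr]] := UZ v vZ vx; rewrite /phi E.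
  move=> u v uZ vZ ux vx euv.
  have [j [E jr]] := UZ u uZ ux; have [j' [E' jr']] := UZ v vZ vx.
  rewrite /phi E E'; apply/eqP => jj.
  by case: Hf => _ _ _ P4; move: (P4 _ _ euv); rewrite E E' jj eqxx.
split => [r3|r2].
  apply: (brooks_complete e_sym e_irr H1 H2 St r3) => Y xY Ycl.
  apply/subsetP => y; rewrite /Z inE => H.
  have [] := conn_ind (P := fun y => y \in Y /\ y \in Z) (conj xY xZ) _ H => //.
  move=> u v [uY uZ] /= /and3P [_ vW euv].
  have vZ := Zcl u v uZ vW euv.
  by split => //; exact: Ycl uY vZ euv.
apply: (brooks_cycle e_sym e_irr H1 H2 St r2) => y; rewrite /Z inE => H.
have [] := conn_ind (P := fun y => y \in component e x Z /\ y \in Z)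
  (conj (comp_refl e x Z) xZ) _ H => //.
move=> u v [uC uZ] /= /and3P [_ vW euv].
have vZ := Zcl u v uZ vW euv.
by split => //; exact: comp_closed uC uZ vZ euv.
Qed.
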